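(* Let $S_{N-2}$ denote the set $\{\pi\in S_N:\pi(1)=2,\ \pi(2)=1\}$, let $\gamma_{ij}\in S_N$ denote the transposition exchanging $i$ and $j$ (with $\gamma_{ii}$ the identity), and for $\pi\in S_{N-2}$ and $a_+,a_-,b_+,b_-\in\{1,\dots,N\}$ define $T_{a_+a_-b_+b_-}(\pi)=\gamma_{2b_+}\gamma_{2a_+}\pi\gamma_{2a_-}\gamma_{2b_-}$ (composition of maps). If $(\pi,a_+,a_-,b_+,b_-)$ is uniform on $S_{N-2}\times\{1,\dots,N\}\times\{2,\dots,N\}^3$, then $T_{a_+a_-b_+b_-}(\pi)$ is uniform on $S_N$. Moreover, \[(T_{a_+a_-b_+b_-}(\pi))(1)=a_+,\qquad(T_{a_+a_-b_+b_-}(\pi))^{-1}(1)=a_-,\] provided that $|\{1,2,a_+,a_-,b_+,b_-\}|=6$. *)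

(* Defs.v *)
(* Points 1..N of the paper are the elements 0..N-1 of 'I_N,
   with N = n.+2 (N >= 2 so that the points 1 and 2 exist). *)
From mathcomp Require Import all_boot all_order all_algebra all_fingroup.
Set Implicit Arguments. Unset Strict Implicit. Unset Printing Implicit Defensive.
Import GRing.Theory Num.Theory.
Local Open Scope ring_scope.

Definition e1 {n : nat} : 'I_n.+2 := ord0.
Definition e2 {n : nat} : 'I_n.+2 := inord 1.

Definition Sm2 (n : nat) : {set {perm 'I_n.+2}} :=
  [set p : {perm 'I_n.+2} | (p e1 == e2) && (p e2 == e1)].

Definition gamma {n : nat} (i j : 'I_n.+2) : {perm 'I_n.+2} := tperm i j.

(* T_{a+ a- b+ b-}(pi) = gamma_{2b+} o gamma_{2a+} o pi o gamma_{2a-} o gamma_{2b-}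
   (composition of maps).  In MathComp, (s * t) x = t (s x), so the map
   composition f o g is written g * f. *)
Definition Tmap {n : nat} (ap am bp bm : 'I_n.+2) (p : {perm 'I_n.+2})
  : {perm 'I_n.+2} :=
  gamma e2 bm * gamma e2 am * p * gamma e2 ap * gamma e2 bp.

(* Sample space S_{N-2} x {1..N} x {2..N}^3; tuple (((pi, a+), a-), b+), b-) *)
Definition Omega (n : nat)
  : {set {perm 'I_n.+2} * 'I_n.+2 * 'I_n.+2 * 'I_n.+2 * 'I_n.+2} :=
  [set x | [&& x.1.1.1.1 \in Sm2 n, x.1.1.2 != e1, x.1.2 != e1 & x.2 != e1]].

(* The pushforward of the uniform distribution on the finite nonempty set D
   under f is the uniform distribution on Y:
   P_D(f = y) = #{x in D | f x = y} / #D = 1 / #Y for every y. *)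
Definition pushforward_uniform (X Y : finType) (D : {set X}) (f : X -> Y) : Prop :=
  forall y : Y,
    (#|[set x in D | f x == y]|%:R / #|D|%:R : rat) = (#|Y|%:R)^-1.

(* Main.v *)
Require Import Defs.
From mathcomp Require Import all_boot all_order all_algebra all_fingroup.
Set Implicit Arguments. Unset Strict Implicit. Unset Printing Implicit Defensive.
Import GRing.Theory Num.Theory.

Lemma e1e2 n : (@e1 n) != e2.
Proof. by rewrite /e1 /e2; apply/eqP => /(congr1 val); rewrite /= inordK. Qed.

Lemma bodyE (T : finType) (u : {perm T}) x : fun_of_perm.body u x = u x.
Proof. by rewrite fun_of_perm.unlock. Qed.

Section S.
Variable n : nat.
Local Notation OI := ('I_n.+2).
Local Notation g := (@gamma n e2).

Lemma gg (x : OI) : (g x * g x = 1)%g.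
Proof. by rewrite /gamma tperm2. Qed.
Lemma mul_g (x : OI) (s : {perm OI}) : (g x * (g x * s) = s)%g.
Proof. by rewrite mulgA /gamma tperm2 mul1g. Qed.
Lemma mul_g' (x : OI) (s : {perm OI}) : (s * g x * g x = s)%g.
Proof. by rewrite -mulgA /gamma tperm2 mulg1. Qed.

Definition sig' (y : {perm OI}) (b : OI * OI) : {perm OI} := (g b.2 * y * g b.1)%g.
Definition apG y b := sig' y b e1.
Definition amG y b := if apG y b == e1 then (sig' y b)^-1%g e2 else (sig' y b)^-1%g e1.
Definition pG y b : {perm OI} := (g (amG y b) * sig' y b * g (apG y b))%g.
Definition G y b := (pG y b, apG y b, amG y b, b.1, b.2).
Definition Pset : {set OI * OI} := [set b | (b.1 != e1) && (b.2 != e1)].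
Definition T' (x : {perm OI} * OI * OI * OI * OI) :=
  Tmap x.1.1.1.2 x.1.1.2 x.1.2 x.2 x.1.1.1.1.

Lemma fiber y : [set x in Omega n | T' x == y] = G y @: Pset.
Proof.
have h12 := e1e2 n.
have h21 : (@e2 n) != e1 by rewrite eq_sym.
apply/setP => x; rewrite !inE; apply/andP/imsetP.
- case: x => [[[[p ap] am] bp] bm] /=; rewrite /T' /=.
  move=> [/and4P[/andP[/eqP p1 /eqP p2] am1 bp1 bm1] /eqP <-].
  exists (bp, bm); first by rewrite inE /= bp1 bm1.
  have Es : sig' (Tmap ap am bp bm p) (bp, bm) = (g am * p * g ap)%g.
    by apply/permP => z; rewrite /sig' /Tmap /= !permM /gamma !tpermK.
  have Eap : apG (Tmap ap am bp bm p) (bp, bm) = ap.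
    by rewrite /apG Es !permM /gamma (tpermD h21 am1) p1 tpermL.
  have Eam : amG (Tmap ap am bp bm p) (bp, bm) = am.
    rewrite /amG Eap Es; case: ifP => [/eqP ->|ap1]; apply/(canLR (permK _)).
      by rewrite !permM /gamma tpermR p2 tpermR.
    by rewrite !permM /gamma tpermR p2 (tpermD h21 (negbT ap1)).
  rewrite /G /pG Eap Eam Es /=; congr (_, _, _, _, _).
  by apply/permP => z; rewrite !permM /gamma !tpermK.
- case=> [[bp bm]]; rewrite inE /= => /andP[bp1 bm1] ->.
  rewrite /T' /G /= bp1 bm1 /=.
  set s := sig' y (bp, bm).
  have Eap : s e1 = apG y (bp, bm) by [].
  have am1 : amG y (bp, bm) != e1.
    rewrite /amG; case: ifP => [/eqP ap1|ap1]; apply/eqP => E.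
      by move: (congr1 s E); rewrite permKV -/s Eap ap1 => /eqP; rewrite (negbTE h21).
    by move: (congr1 s E); rewrite permKV -/s Eap => /eqP; rewrite eq_sym ap1.
  split; last first.
    by apply/eqP/permP => z; rewrite /Tmap /pG -/s /s /sig' /= !permM /gamma !tpermK.
  have Ep : forall z, pG y (bp, bm) z = tperm e2 (apG y (bp, bm)) (s (tperm e2 (amG y (bp, bm)) z)).
    by move=> z; rewrite /pG /gamma permM permM.
  have EM : amG y (bp, bm) = if apG y (bp, bm) == e1 then s^-1%g e2 else s^-1%g e1 by [].
  rewrite am1 andbT /= !Ep ?bodyE.
  move: Eap EM am1; move: (apG y (bp, bm)) (amG y (bp, bm)) => A M Eap EM am1.
  rewrite (tpermD h21 am1) Eap tpermR eqxx /= tpermL.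
  rewrite EM; case: ifP => [/eqP ap1|ap1].
    by rewrite permKV tpermL ap1.
  by rewrite permKV (tpermD h21 (negbT ap1)).
Qed.

Lemma card_fiber y : #|[set x in Omega n | T' x == y]| = (n.+1 * n.+1)%N.
Proof.
rewrite fiber card_in_imset.
  have -> : Pset = setX [set~ e1] [set~ e1].
    by apply/setP => -[a b]; rewrite !inE.
  by rewrite cardsX cardsC1 card_ord.
move=> [a b] [a' b'] _ _ E.
by move: (congr1 (fun x => (x.1.2, x.2)) E).
Qed.

End S.

Lemma card6 (T : finType) (x1 x2 x3 x4 x5 x6 : T) :
  #|[set x1; x2; x3; x4; x5; x6]| = 6 -> uniq [:: x1; x2; x3; x4; x5; x6].
Proof.
move=> H; apply/card_uniqP; rewrite [size _]/= -H; apply: eq_card => z.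
by rewrite !inE; rewrite !orbA.
Qed.

Theorem lemma7p1 (n : nat) :
  pushforward_uniform (Omega n)
    (fun x => Tmap x.1.1.1.2 x.1.1.2 x.1.2 x.2 x.1.1.1.1)
  /\
  (forall (p : {perm 'I_n.+2}) (ap am bp bm : 'I_n.+2),
      (p, ap, am, bp, bm) \in Omega n ->
      #|[set e1; e2; ap; am; bp; bm]| = 6 ->
      Tmap ap am bp bm p e1 = ap /\ (invg (Tmap ap am bp bm p)) e1 = am).
Proof.
split.
- move=> y.
  have cD : #|Omega n| = (#|{perm 'I_n.+2}| * (n.+1 * n.+1))%N.
    rewrite -sum1_card (partition_big (T' (n:=n)) predT) //=.
    rewrite -sum_nat_const; apply: eq_bigr => z _.
    by rewrite -(card_fiber z) -sum1_card; apply: eq_bigl => x; rewrite inE.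
  have := card_fiber y; rewrite /T' => ->; rewrite cD.
  set c := (n.+1 * n.+1)%N.
  rewrite natrM invfM mulrCA divff ?mulr1 //.
  by rewrite pnatr_eq0 /c muln_eq0.
- move=> p ap am bp bm; rewrite /Omega /Sm2 !inE /=.
  case/and4P=> /andP[/eqP p1 /eqP p2] am1 bp1 bm1 /card6 /=.
  rewrite !inE !negb_or => /andP[/and5P[_ a1 _ _ _] /and5P[/and4P[a2 a3 _ _] /and3P[_ b2 _] /andP[_ c2] _ _]].
  have h21 : (@e2 n) != e1 by rewrite eq_sym e1e2.
  have ap1 : ap != e1 by rewrite eq_sym.
  have Tam : Tmap ap am bp bm p am = e1.
    rewrite /Tmap !permM /gamma.
    rewrite (tpermD a3 (_ : bm != am)) 1?eq_sym // tpermR p2.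
    by rewrite (tpermD h21 ap1) (tpermD h21 bp1).
  split.
    rewrite /Tmap !permM /gamma (tpermD h21 bm1) (tpermD h21 am1) p1 tpermL.
    by rewrite (tpermD a2 (_ : bp != ap)) // eq_sym.
  by rewrite -Tam permK.
Qed.
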